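(* Assume Banderier's conjecture. Then for every $i\ge1$ such that $p_i\#-1$ is not a prime, the primorial $p_i\#$ belongs to the set $S$.
   Context: Let $p_1<p_2<\cdots$ be the primes and $p_i\#=p_1p_2\cdots p_i$ the $i$-th primorial. Banderier's conjecture: for every $i\ge2$, if $q$ is the largest prime smaller than $p_i\#$, then either $p_i\#-q=1$ or $p_i\#-q$ is a prime. Let $S$ be the set of integers $n\ge2$ such that, writing $p^a$ for the largest prime power dividing $n$, there is no prime $q$ with $n-p^a<q<n$. *)

(* Defs.v *)
From mathcomp Require Import all_boot.
Set Implicit Arguments. Unset Strict Implicit. Unset Printing Implicit Defensive.

Lemma next_prime_ex (m : nat) : exists p, (m < p) && prime p.
Proof. by case: (prime_above m) => p H1 H2; exists p; rewrite H1 H2. Qed.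

Definition next_prime (m : nat) : nat := ex_minn (next_prime_ex m).

(* pr j = the (j+1)-th prime, 0-indexed: pr 0 = 2, pr 1 = 3, ... *)
Fixpoint pr (j : nat) : nat :=
  match j with
  | 0 => 2
  | j'.+1 => next_prime (pr j')
  end.

(* p_i for i >= 1 (1-indexed as in the paper): p_1 = 2. *)
Definition nth_prime (i : nat) : nat := pr i.-1.

Definition primorial (i : nat) : nat := \prod_(1 <= k < i.+1) nth_prime k.

Definition banderier_conjecture : Prop :=
  forall i q : nat, 2 <= i ->
    prime q -> q < primorial i ->
    (forall r, prime r -> r < primorial i -> r <= q) ->
    primorial i - q = 1 \/ prime (primorial i - q).

Definition largest_prime_power (n m : nat) : Prop :=
  exists p a, [/\ prime p, 0 < a, m = p ^ a, p ^ a %| n &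
    forall q b, prime q -> 0 < b -> q ^ b %| n -> q ^ b <= m].

Definition in_S (n : nat) : Prop :=
  2 <= n /\ exists m, largest_prime_power n m /\
    ~ (exists q, [/\ prime q, n - m < q & q < n]).

(* Main.v *)
Require Import Defs.
From mathcomp Require Import all_boot.
From mathcomp Require Import zify.

Lemma pr_spec j : prime (pr j) /\ pr j < pr j.+1 /\
  (forall r, pr j < r -> prime r -> pr j.+1 <= r).
Proof.
rewrite /= /next_prime; case: ex_minnP => m /andP[H1 H2] Hmin.
split; last split => //.
  by case: j {H1 H2 Hmin} => [|j] //=; rewrite /next_prime; case: ex_minnP => ? /andP[].
by move=> r Hr Pr; apply: Hmin; rewrite Hr Pr.
Qed.

Lemma pr_prime j : prime (pr j).
Proof. by case: (pr_spec j). Qed.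

Lemma pr_mono k j : k < j -> pr k < pr j.
Proof.
elim: j => // j IH; rewrite ltnS leq_eqVlt => /orP[/eqP->|/IH H].
  by case: (pr_spec j) => _ [].
by apply: ltn_trans H _; case: (pr_spec j) => _ [].
Qed.

Lemma pr_all r j : prime r -> r <= pr j -> exists2 k, k <= j & r = pr k.
Proof.
move=> Pr; elim: j => [|j IH] H.
  by exists 0 => //; apply/eqP; rewrite eqn_leq H prime_gt1.
case: (ltnP (pr j) r) => Hr.
  exists j.+1 => //; apply/eqP; rewrite eqn_leq H.
  by case: (pr_spec j) => _ [_]; apply.
by case: (IH Hr) => k Hk ->; exists k => //; apply: leqW.
Qed.

Lemma primorialS j : primorial j.+1 = primorial j * pr j.
Proof. by rewrite /primorial big_nat_recr. Qed.

Lemma primorial_gt0 j : 0 < primorial j.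
Proof.
elim: j => [|j IH]; first by rewrite /primorial big_geq.
by rewrite primorialS muln_gt0 IH prime_gt0 // pr_prime.
Qed.

Lemma pr_dvd k j : k < j -> pr k %| primorial j.
Proof.
elim: j => // j IH; rewrite primorialS ltnS leq_eqVlt => /orP[/eqP->|/IH H].
  by apply: dvdn_mull.
by apply: dvdn_mulr.
Qed.

Lemma dvd_primorial q j : prime q -> q %| primorial j ->
  (exists2 k, k < j & q = pr k) /\ logn q (primorial j) <= 1.
Proof.
move=> Pq; elim: j => [|j IH].
  by rewrite /primorial big_geq // dvdn1 => /eqP E; rewrite E in Pq.
rewrite primorialS Euclid_dvdM // lognM ?primorial_gt0 ?prime_gt0 ?pr_prime //.
rewrite (logn_prime _ (pr_prime j)).
case: (boolP (q %| primorial j)) => Hd /=.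
  case: (IH Hd) => [[k Hk Eq] Hl]; split; first by exists k => //; apply: leqW.
  have -> : (q == pr j) = false.
    by apply/negbTE; rewrite Eq neq_ltn pr_mono.
  by rewrite addn0.
rewrite dvdn_prime2 ?pr_prime // => /eqP Eq; split; first by exists j.
have -> : logn q (primorial j) = 0.
  by apply/eqP; rewrite eqn0Ngt logn_gt0 mem_primes Pq primorial_gt0.
by rewrite add0n; case: (q == pr j).
Qed.

Theorem mainTheorem7 :
  banderier_conjecture ->
  forall i : nat, 1 <= i -> ~~ prime (primorial i - 1) -> in_S (primorial i).
Proof.
move=> HB i Hi Hn1.
have Ei : i = i.-1.+1 by lia.
have En : primorial i = primorial i.-1 * pr i.-1 by rewrite {1}Ei primorialS.
have PP := pr_prime i.-1.
have Pdvd : pr i.-1 %| primorial i by rewrite En dvdn_mull.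
have n0 := primorial_gt0 i.
have PleN : pr i.-1 <= primorial i by apply: dvdn_leq.
have P2 := prime_gt1 PP.
split; first by apply: leq_trans PleN.
exists (pr i.-1); split.
  exists (pr i.-1), 1; split => //; rewrite ?expn1 //.
  move=> q b Pq b0 Hqb.
  have Hq : q %| primorial i by apply: dvdn_trans Hqb; apply: dvdn_exp.
  case: (dvd_primorial _ _ Pq Hq) => [[k Hk Eq] Hl]; subst q.
  move: Hqb; rewrite pfactor_dvdn ?pr_prime // => Hb.
  have -> : b = 1 by lia.
  rewrite expn1; case: (ltnP k i.-1) => Hk'; first by apply: ltnW; apply: pr_mono.
  by have -> : k = i.-1 by lia.
move=> [r [Pr H1 H2]].
case: (ltnP i 2) => Hi2.
  have E1 : i = 1 by lia.
  move: H2 H1; rewrite En E1 /= /primorial big_geq // mul1n => H2.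
  by move: (prime_gt1 Pr); lia.
have Pex : exists x, prime x && (x < primorial i) by exists r; rewrite Pr H2.
have Pub : forall x, prime x && (x < primorial i) -> x <= primorial i.
  by move=> x /andP[_ /ltnW].
case: (ex_maxnP Pex Pub) => q /andP[Pq Hq] Hmax.
have Hmx : forall x, prime x -> x < primorial i -> x <= q.
  by move=> x Px Hx; apply: Hmax; rewrite Px Hx.
have Hrq : r <= q by apply: Hmx.
case: (HB i q Hi2 Pq Hq Hmx) => [Hd|Pd].
  have : primorial i - 1 = q by lia.
  by move=> E; rewrite E Pq in Hn1.
set d := primorial i - q in Pd.
have Hdl : d <= pr i.-1 by rewrite /d; lia.
case: (pr_all _ _ Pd Hdl) => k Hk Ed.
have Hdn : d %| primorial i by rewrite Ed; apply: pr_dvd; lia.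
have Hdq : d %| q.
  have -> : q = primorial i - d by rewrite /d; lia.
  by apply: dvdn_sub.
move: Hdq; rewrite dvdn_prime2 // => /eqP Edq.
have H2p : 2 <= primorial i.-1.
  have := pr_dvd 0 i.-1 ltac:(lia).
  move=> /dvdn_leq; apply; exact: primorial_gt0.
have PltN : pr i.-1 < primorial i.
  rewrite En; have := prime_gt0 PP; nia.
have := Hmx _ PP PltN.
rewrite /d in Edq; lia.
Qed.
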